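(* Let $p<q$ be coprime positive integers. Define $\mu:\mathbb Z^3\to\mathbb Z^3$ by $\mu(d_0,d_1,d_j)=(d_0-pd_1+qd_j,\;d_1-d_j,\;pd_1-qd_j)$, let $\Lambda=\mu(\mathbb Z_{\ge0}^3)$, and for $(n,c)\in\mathbb Z^2$ such that $(n,c,\omega)\in\Lambda$ for some $\omega$, let $\omega_{(n,c)}=\min\{\omega\in\mathbb Z:(n,c,\omega)\in\Lambda\}$. Then for every $(n,c,\omega)\in\Lambda$, one has $n+\omega<q-p$ if and only if $\omega=\omega_{(n,c)}$.
   Context: The minimum $\omega_{(n,c)}$ exists whenever the set is nonempty (for $(d_0,d_1,d_j)\in\mathbb Z_{\ge 0}^3$ with $\mu(d_0,d_1,d_j)=(n,c,\omega)$ one has $d_0=n+\omega\ge0$). Here $\mu$ records, for a monomial $X_0^{d_0}X_1^{d_1}X_j^{d_j}$ in $\mathbb C[X_0,X_1,X_j]$ ($j\in\{3,4\}$), its $\mathbb C^*$-weight $n$, the difference $c=d_1-d_j$ and an auxiliary weight $\omega$. *)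

(* Defs.v *)
From Stdlib Require Import ZArith Lia.
Open Scope Z_scope.

Definition mu (p q : Z) (d : Z * Z * Z) : Z * Z * Z :=
  let '(d0, d1, dj) := d in
  (d0 - p * d1 + q * dj, d1 - dj, p * d1 - q * dj).

Definition in_Lambda (p q : Z) (v : Z * Z * Z) : Prop :=
  exists d0 d1 dj : Z, 0 <= d0 /\ 0 <= d1 /\ 0 <= dj /\ mu p q (d0, d1, dj) = v.

Definition is_omega_min (p q n c w : Z) : Prop :=
  in_Lambda p q (n, c, w) /\
  forall w' : Z, in_Lambda p q (n, c, w') -> w <= w'.

(* Main.v *)
Require Import Defs.
From Stdlib Require Import ZArith Lia.
Open Scope Z_scope.

Theorem lemma4p15 (p q : Z) (hp : 0 < p) (hpq : p < q) (hcop : Z.gcd p q = 1) :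
  forall n c w : Z, in_Lambda p q (n, c, w) ->
    (n + w < q - p <-> is_omega_min p q n c w).
Proof.
  intros n c w [d0 [d1 [dj [H0 [H1 [H2 E]]]]]].
  unfold mu in E. injection E as E1 E2 E3.
  split.
  - intros Hlt. split.
    + exists d0, d1, dj. repeat split; try lia. unfold mu. subst. reflexivity.
    + intros w' [e0 [e1 [ej [G0 [G1 [G2 F]]]]]].
      unfold mu in F. injection F as F1 F2 F3.
      assert (Hd1 : d1 = c + dj) by lia.
      assert (He1 : e1 = c + ej) by lia.
      subst d1 e1.
      assert (Hw : w = p * c - (q - p) * dj) by lia.
      assert (Hw' : w' = p * c - (q - p) * ej) by lia.
      destruct (Z_le_gt_dec ej dj) as [Hle|Hgt].
      * assert ((q - p) * ej <= (q - p) * dj) by (apply Z.mul_le_mono_nonneg_l; lia). lia.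
      * assert ((q - p) * (dj + 1) <= (q - p) * ej) by (apply Z.mul_le_mono_nonneg_l; lia). lia.
  - intros [_ Hmin].
    destruct (Z_lt_le_dec (n + w) (q - p)) as [Hl|Hge]; [exact Hl|].
    exfalso.
    assert (HL : in_Lambda p q (n, c, w - (q - p))).
    { exists (d0 - (q - p)), (d1 + 1), (dj + 1).
      repeat split; try lia. unfold mu. f_equal; [f_equal|]; lia. }
    specialize (Hmin _ HL). lia.
Qed.
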